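(* Let $\mathcal{D}=\mathcal{P}_{\mathcal{D}}\cup\mathcal{L}_{\mathcal{D}}$ be a stable dominating set of the incidence graph of an arbitrary projective plane $\Pi_q$ of order $q$ with $|\mathcal{D}|<3q-1$. Suppose there is a point $P$ with $|[P]\cap\mathcal{L}_{\mathcal{D}}|=q+1$. Then one of the following holds: (1) $\mathcal{L}_{\mathcal{D}}=[P]$, $P\notin\mathcal{P}_{\mathcal{D}}$, and $\mathcal{P}_{\mathcal{D}}\cup\{P\}$ is a blocking set of $\Pi_q$ in which every point other than possibly $P$ is essential; (2) there is a unique line $\ell$ not through $P$ such that $\mathcal{L}_{\mathcal{D}}=[P]\cup\{\ell\}$, $P\notin\mathcal{P}_{\mathcal{D}}$, and $\mathcal{P}_{\mathcal{D}}\cup\{P\}$ is a blocking set of the affine plane $\Pi_q\setminus\ell$ in which every point other than possibly $P$ is essential.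
   Context: A dominating set $\mathcal{D}=\mathcal{P}_{\mathcal{D}}\cup\mathcal{L}_{\mathcal{D}}$ of the incidence graph of $\Pi_q$ is a set of points and lines such that every point not in $\mathcal{P}_{\mathcal{D}}$ lies on a line of $\mathcal{L}_{\mathcal{D}}$ and every line not in $\mathcal{L}_{\mathcal{D}}$ contains a point of $\mathcal{P}_{\mathcal{D}}$. $\mathcal{D}$ is stable if it is minimal (no proper subset dominating) and there is no dominating set $\mathcal{D}'\supset\mathcal{D}$ with $|\mathcal{D}'|=|\mathcal{D}|+1$ that contains a dominating set of size less than $|\mathcal{D}|$. $[P]$ is the set of lines through $P$. A blocking set (of a projective or affine plane) is a point set meeting every line of that plane; a point $Q$ of a blocking set $\mathcal{B}$ is essential if $\mathcal{B}\setminus\{Q\}$ is not a blocking set. $\Pi_q\setminus\ell$ denotes the affine plane obtained by deleting the line $\ell$ and its points. *)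

(* Defs.v *)
From mathcomp Require Import all_boot.
Set Implicit Arguments. Unset Strict Implicit. Unset Printing Implicit Defensive.

Section ProjPlane.
Variables (Pt Ln : finType) (inc : Pt -> Ln -> bool).

Definition is_proj_plane (q : nat) : Prop :=
  [/\ (forall x y : Pt, x != y ->
         exists l, [/\ inc x l, inc y l &
                   forall l', inc x l' -> inc y l' -> l' = l]),
      (forall l m : Ln, l != m ->
         exists x, [/\ inc x l, inc x m &
                   forall x', inc x' l -> inc x' m -> x' = x]),
      (exists s : seq Pt, size s = 4 /\ uniq s /\
         forall l, #|[set x in s | inc x l]| <= 2) &
      (forall l, #|[set x | inc x l]| = q.+1)].

Definition pencil (P : Pt) : {set Ln} := [set l | inc P l].

Definition dominating (PD : {set Pt}) (LD : {set Ln}) : Prop :=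
  (forall x, x \notin PD -> exists2 l, l \in LD & inc x l) /\
  (forall l, l \notin LD -> exists2 x, x \in PD & inc x l).

Definition dsize (PD : {set Pt}) (LD : {set Ln}) : nat := #|PD| + #|LD|.

Definition minimal_dom (PD : {set Pt}) (LD : {set Ln}) : Prop :=
  dominating PD LD /\
  forall (PD' : {set Pt}) (LD' : {set Ln}), PD' \subset PD -> LD' \subset LD ->
    (PD' != PD) || (LD' != LD) -> ~ dominating PD' LD'.

Definition stable_dom (PD : {set Pt}) (LD : {set Ln}) : Prop :=
  minimal_dom PD LD /\
  forall (PD' : {set Pt}) (LD' : {set Ln}), PD \subset PD' -> LD \subset LD' ->
    dominating PD' LD' -> dsize PD' LD' = (dsize PD LD).+1 ->
    ~ (exists (PD'' : {set Pt}) (LD'' : {set Ln}), [/\ PD'' \subset PD', LD'' \subset LD',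
          dominating PD'' LD'' & dsize PD'' LD'' < dsize PD LD]).

Definition blocking (B : {set Pt}) : Prop :=
  forall l, exists2 x, x \in B & inc x l.

Definition essential_except (blk : {set Pt} -> Prop) (B : {set Pt}) (P : Pt)
  : Prop :=
  forall Q, Q \in B -> Q != P -> ~ blk (B :\ Q).

Definition aff_blocking (ell : Ln) (B : {set Pt}) : Prop :=
  (forall x, x \in B -> ~~ inc x ell) /\
  forall l, l != ell -> exists2 x, x \in B & inc x l.

End ProjPlane.

(* Main.v *)
Require Import Defs.
From mathcomp Require Import all_boot.
From mathcomp Require Import zify.
Set Implicit Arguments. Unset Strict Implicit. Unset Printing Implicit Defensive.

Lemma line_avoid (Pt Ln : finType) (inc : Pt -> Ln -> bool) q (P : Pt) :
  is_proj_plane inc q -> exists l, ~~ inc P l.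
Proof.
case=> ax1 ax2 [s [Hs [Hu Hc]]] ax4.
case: (pickP (fun l => ~~ inc P l)) => [l Hl|H]; first by exists l.
have HP : forall l, inc P l by move=> l; move: (H l) => /negbFE.
have key: forall a b c, a \in s -> b \in s -> c \in s -> a != b -> a != c -> b != c -> a != P -> False.
  move=> a b c aS bS cS ab ac bc aP.
  have [l1 [a1 b1 u1]] := ax1 a b ab.
  have [l2 [a2 c2 u2]] := ax1 a c ac.
  have [l3 [a3 P3 u3]] := ax1 a P aP.
  have e1 : l1 = l3 := u3 l1 a1 (HP l1).
  have e2 : l2 = l3 := u3 _ a2 (HP l2).
  subst l1 l2.
  have sub : a |: [set b; c] \subset [set x in s | inc x l3].
    by apply/subsetP => x; rewrite !inE => /orP [|/orP []] /eqP ->; rewrite ?aS ?bS ?cS.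
  have := subset_leq_card sub; have := Hc l3. rewrite cardsU1 cards2 !inE negb_or ab ac bc /=. lia.
clear Hc; move: Hs Hu key; case: s => [|a [|b [|c [|d []]]]] //= _.
rewrite !inE !negb_or => /and4P [/and3P [ab ac ad] /andP [bc bd] cd _] key; exfalso.
case: (eqVneq a P) => [aP|aP].
  apply: (key b c d); rewrite ?inE ?eqxx ?orbT //. by rewrite -aP eq_sym.
by apply: (key a b c); rewrite ?inE ?eqxx ?orbT.
Qed.

Lemma pencil_card (Pt Ln : finType) (inc : Pt -> Ln -> bool) q (P : Pt) :
  is_proj_plane inc q -> #|pencil inc P| <= q.+1.
Proof.
move=> pp; have [l Hl] := line_avoid P pp; case: pp => ax1 ax2 _ ax4.
pose f m := if [pick x | inc x m && inc x l] is Some x then x else P.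
have fP : forall m, inc P m -> inc (f m) m && inc (f m) l.
  move=> m Pm; rewrite /f; case: pickP => [x //|H].
  have ml : m != l by apply: contraNneq Hl => <-.
  have [x [xm xl _]] := ax2 _ _ ml; by have := H x; rewrite xm xl.
have inj : {in pencil inc P &, injective f}.
  move=> m1 m2; rewrite /pencil !inE => P1 P2 e.
  case/andP: (fP _ P1) => x1 l1; case/andP: (fP _ P2) => x2 l2.
  have xP : f m1 != P by apply: contraNneq Hl => <-.
  have [n [_ _ u]] := ax1 _ _ xP; by rewrite (u m1 x1 P1) (u m2 _ P2) // e.
rewrite -(ax4 l) -(card_in_imset inj); apply: subset_leq_card; apply/subsetP => y /imsetP [m].
by rewrite /pencil inE => Pm ->; rewrite inE; case/andP: (fP m Pm).
Qed.

Lemma cover (Pt Ln : finType) (inc : Pt -> Ln -> bool) q (P : Pt) :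
  is_proj_plane inc q -> forall x, exists l, inc P l && inc x l.
Proof.
move=> pp; have [l0 Hl0] := line_avoid P pp; case: pp => ax1 _ _ ax4.
have gen : forall x, x != P -> exists l, inc P l && inc x l.
  by move=> x xP; have [l [xl Pl _]] := ax1 _ _ xP; exists l; rewrite xl Pl.
move=> x; case: (eqVneq x P) => [->|]; last exact: gen.
have : 0 < #|[set y | inc y l0]| by rewrite ax4.
case/card_gt0P => y; rewrite inE => yl.
have yP : y != P by apply: contraNneq Hl0 => <-.
by have [l /andP [Pl _]] := gen y yP; exists l; rewrite Pl.
Qed.

Lemma neqD1 (T : finType) (A : {set T}) a : a \in A -> A :\ a != A.
Proof. by move=> aA; apply/negP => /eqP E; have := setD11 a A; rewrite E aA. Qed.

Theorem lemma2 (Pt Ln : finType) (inc : Pt -> Ln -> bool) (q : nat)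
  (PD : {set Pt}) (LD : {set Ln}) (P : Pt) :
  is_proj_plane inc q ->
  stable_dom inc PD LD ->
  dsize PD LD < 3 * q - 1 ->
  #|pencil inc P :&: LD| = q.+1 ->
  (LD = pencil inc P /\ P \notin PD /\
     blocking inc (P |: PD) /\
     essential_except (blocking inc) (P |: PD) P)
  \/
  (exists ell : Ln,
     [/\ ~~ inc P ell, LD = pencil inc P :|: [set ell], P \notin PD &
         (aff_blocking inc ell (P |: PD) /\
         essential_except (aff_blocking inc ell) (P |: PD) P /\
         forall ell' : Ln, ~~ inc P ell' ->
           LD = pencil inc P :|: [set ell'] -> ell' = ell)]).
Proof.
move=> pp [[[Hdp Hdl] Hmin] Hstab] _ Hcard.
have cov0 := cover P pp.
have [ax1 ax2 _ _] := pp.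
have pen_sub : pencil inc P \subset LD.
  have e : pencil inc P :&: LD = pencil inc P.
    by apply/eqP; rewrite eqEcard subsetIl Hcard pencil_card.
  by apply/setIidPl.
have penLD : forall l, inc P l -> l \in LD.
  by move=> l Pl; apply: (subsetP pen_sub); rewrite /pencil inE.
have nPl : forall l, l \notin LD -> ~~ inc P l.
  by move=> l; apply: contra; apply: penLD.
have cov : forall x, exists2 l, l \in LD & inc x l.
  by move=> x; have [l /andP [Pl xl]] := cov0 x; exists l => //; apply: penLD.
have PnPD : P \notin PD.
  apply/negP => PP; apply: (Hmin (PD :\ P) LD (subsetDl _ _) (subxx _)).
    by rewrite neqD1.
  split; first by move=> x _; apply: cov.
  move=> l lnot; have [x xPD xl] := Hdl l lnot.
  have xP : x != P by apply: contraNneq (nPl l lnot) => <-.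
  by exists x; rewrite // !inE xP.
have noPD : forall m, m \in LD -> ~~ inc P m -> forall x, x \in PD -> ~~ inc x m.
  move=> m mLD mP x xPD; apply/negP => xm.
  apply: (Hmin PD (LD :\ m) (subxx _) (subsetDl _ _)).
    by rewrite neqD1 ?orbT.
  split.
    move=> y _; have [l /andP [Pl yl]] := cov0 y; exists l => //.
    rewrite !inE penLD // andbT; by apply: contraNneq mP => <-.
  move=> l; rewrite !inE negb_and negbK; case: (eqVneq l m) => [->|lm] /= lnot.
    by exists x.
  exact: Hdl.
have two : forall m1 m2, m1 \in LD -> m2 \in LD -> ~~ inc P m1 -> ~~ inc P m2 -> m1 = m2.
  move=> m1 m2 L1 L2 P1 P2; case: (eqVneq m1 m2) => // ne; exfalso.
  have [R [R1 R2 _]] := ax2 _ _ ne.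
  have RnPD : R \notin PD by apply/negP => RP; have := noPD m1 L1 P1 R RP; rewrite R1.
  apply: (Hstab (R |: PD) LD (subsetUr _ _) (subxx _)).
  - split; last by move=> l /Hdl [x xPD xl]; exists x; rewrite // inE xPD orbT.
    by move=> x; rewrite inE negb_or => /andP [_ /Hdp].
  - by rewrite /dsize cardsU1 RnPD.
  exists (R |: PD), (LD :\ m1 :\ m2); split.
  - exact: subxx.
  - exact: subset_trans (subsetDl _ _) (subsetDl _ _).
  - split.
      move=> y _; have [l /andP [Pl yl]] := cov0 y; exists l => //.
      rewrite !inE penLD // andbT.
      by apply/andP; split; [apply: contraNneq P2 => <- | apply: contraNneq P1 => <-].
    move=> l; rewrite !inE !negb_and !negbK.
    case: (eqVneq l m2) => [->|lm2] /=; first by exists R; rewrite ?inE ?eqxx.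
    case: (eqVneq l m1) => [->|lm1] /=; first by exists R; rewrite ?inE ?eqxx.
    by move/Hdl => [x xPD xl]; exists x; rewrite // inE xPD orbT.
  - rewrite /dsize cardsU1 RnPD (cardsD1 m1 LD) L1 (cardsD1 m2 (LD :\ m1)).
    by rewrite !inE eq_sym ne L2 /=; lia.
case: (pickP (fun m => (m \in LD) && ~~ inc P m)) => [ell /andP [ellLD ellP] | none].
- right; exists ell.
  have LDe : LD = pencil inc P :|: [set ell].
    apply/setP => m; rewrite /pencil !inE; case: (boolP (inc P m)) => Pm /=.
      exact: penLD.
    by apply/idP/eqP => [mLD|->//]; apply: two.
  split => //; split.
  + split; first by move=> x; rewrite !inE => /orP [/eqP->//|]; apply: noPD.
    move=> l lell; case: (boolP (inc P l)) => Pl; first by exists P; rewrite ?setU11.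
    have lnot : l \notin LD by rewrite LDe /pencil !inE negb_or (negbTE Pl) lell.
    by have [x xPD xl] := Hdl l lnot; exists x; rewrite // inE xPD orbT.
  + split.
      move=> Q; rewrite !inE => /orP [/eqP->|QPD]; first by rewrite eqxx.
      move=> QP [_ Hb]; apply: (Hmin (PD :\ Q) LD (subsetDl _ _) (subxx _)).
        by rewrite neqD1.
      split; first by move=> x _; apply: cov.
      move=> l lnot; have lell : l != ell by apply: contraNneq lnot => ->.
      have [x] := Hb l lell; rewrite !inE => /andP [xQ /orP [/eqP xP|xPD]] xl.
        by move: (nPl l lnot); rewrite -xP xl.
      by exists x; rewrite // !inE xQ xPD.
    move=> ell' P' E'.
    have L' : ell' \in LD by rewrite E' !inE eqxx orbT.
    exact: two.
- left.
  have LDe : LD = pencil inc P.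
    apply/eqP; rewrite eqEsubset pen_sub andbT; apply/subsetP => m mLD.
    by rewrite /pencil inE; move: (none m); rewrite mLD /= => /negbFE.
  split => //; split => //; split.
    move=> l; case: (boolP (inc P l)) => Pl; first by exists P; rewrite ?setU11.
    have lnot : l \notin LD by rewrite LDe /pencil inE.
    by have [x xPD xl] := Hdl l lnot; exists x; rewrite // inE xPD orbT.
  move=> Q; rewrite !inE => /orP [/eqP->|QPD]; first by rewrite eqxx.
  move=> QP Hb; apply: (Hmin (PD :\ Q) LD (subsetDl _ _) (subxx _)).
    by rewrite neqD1.
  split; first by move=> x _; apply: cov.
  move=> l lnot.
  have [x] := Hb l; rewrite !inE => /andP [xQ /orP [/eqP xP|xPD]] xl.
    by move: (nPl l lnot); rewrite -xP xl.
  by exists x; rewrite // !inE xQ xPD.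
Qed.
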